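(* Let $u=s_{i_1}\cdots s_{i_l}$ and $v=s_{j_1}\cdots s_{j_m}$ (both nonempty) be reduced words for glides in $\hat S_n$, $v$ of offset $k_2$, with $vu$ reduced, and let $\alpha_1,\dots,\alpha_n\in\mathbb R$ satisfy $\alpha_i<\alpha_j$ whenever $i\triangleleft j$ in the wiring diagram of $v|u$. Let $\tilde v=\rho^{-k_2}(v)$ with reduced word $s_{j_1-k_2}\cdots s_{j_m-k_2}$, and let $(t_1,\dots,t_n)$, $(t'_1,\dots,t'_n)$ be representatives of $t(u)$ and $t(\tilde v)$. Let $b\neq c$ be real numbers in the same connected component of $\mathbb R\setminus\{\alpha_1,\dots,\alpha_n\}$ with $f(b)=f(c)$ where $f(t)=\prod_j(t-\alpha_j)$ (a $1$-soliton), and $B_j=\frac{b-\alpha_j}{c-\alpha_j}$. Then the speed $$p=\frac{t'_1\log B_1+\dots+t'_n\log B_n}{t_1\log B_1+\dots+t_n\log B_n}$$ is positive.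
   Context: $\hat S_n$: generators $s_0,\dots,s_{n-1}$ (indices mod $n$), relations $s_i^2=1$, $s_is_js_i=s_js_is_j$ if $i-j\equiv\pm1$, $s_is_j=s_js_i$ if $i-j\not\equiv0,\pm1$; $\rho$ is the automorphism $s_i\mapsto s_{i+1}$. $\phi:\hat S_n\to S_n$, $s_i\mapsto(i\ i+1)$, $s_0\mapsto(1\ n)$; a glide of offset $k$ is $g$ with $\phi(g)(j)\equiv j+k\pmod n$. Wiring diagram: letters drawn left to right on a cylinder with wires in positions $1,\dots,n$ (mod $n$), $s_i$ a crossing of positions $i,i+1$ ($s_0$: $n$ and $1$); the upper wire of $s_i$ passes from position $i+1$ to $i$ (for $s_0$ from $1$ to $n$). In the diagram of $v|u$, wire $i$ is the wire in position $i$ at the cut between $v$ and $u$; $i\triangleleft j$ means wires $i,j$ cross with $j$ the upper wire. Trajectory of a glide $g$ with a reduced word: lift the diagram of $|g$ to the universal cover (integer positions, wires labelled by starting position); a chamber with set $S$ of underlying wire labels has label $(\mathbf s_i)$, $\mathbf s_i=\lceil\max\{b\in S:b\equiv i\bmod n\}/n\rceil$; $t(g)\in\mathbb Z^n/\mathbb Z(1,\dots,1)$ is the label of the chamber directly above wire $1$ at the right end minus that at the left end. *)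

(* Defs.v *)
From HB Require Import structures.
From Stdlib Require Import Relations.
From mathcomp Require Import all_boot all_order all_algebra.
From mathcomp Require Import reals exp.
Set Implicit Arguments. Unset Strict Implicit. Unset Printing Implicit Defensive.
Import Order.TTheory GRing.Theory Num.Theory.
Local Open Scope ring_scope.

(* Words in the affine symmetric group \hat S_n: a word is a sequence of
   integers, the letter a standing for the generator s_(a mod n). *)

Inductive gstep (n : nat) : seq int -> seq int -> Prop :=
| gs_rep x y (a a' : int) :
    (a = a' %[mod n%:Z])%Z -> gstep n (x ++ a :: y) (x ++ a' :: y)
| gs_sq x y (a : int) : gstep n (x ++ a :: a :: y) (x ++ y)
| gs_braid x y (a b : int) :
    ((a - b = 1 %[mod n%:Z])%Z \/ (a - b = -1 %[mod n%:Z])%Z) ->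
    gstep n (x ++ [:: a; b; a] ++ y) (x ++ [:: b; a; b] ++ y)
| gs_comm x y (a b : int) :
    ~ (a - b = 0 %[mod n%:Z])%Z -> ~ (a - b = 1 %[mod n%:Z])%Z ->
    ~ (a - b = -1 %[mod n%:Z])%Z ->
    gstep n (x ++ a :: b :: y) (x ++ b :: a :: y).

Definition weq (n : nat) : seq int -> seq int -> Prop :=
  clos_refl_sym_trans _ (gstep n).

Definition reduced (n : nat) (w : seq int) : Prop :=
  forall w', weq n w w' -> (size w <= size w')%N.

(** The crossing of positions p, p+1 for all p = a (mod n) on the universal
    cover Z of the cylinder; it is also the affine lift of phi(s_a). *)
Definition tau (n : nat) (a : int) (p : int) : int :=
  if (p == a %[mod n%:Z])%Z then p + 1
  else if (p == a + 1 %[mod n%:Z])%Z then p - 1 else p.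

(** Reduced mod n this is
    phi(g) = phi(s_(i1)) ... phi(s_(il)) (usual composition of permutations);
    it is also the state of the lifted wiring diagram of w at its right end:
    the wire in position p has starting position (label) phi w p. *)
Definition phi (n : nat) (w : seq int) : int -> int :=
  foldr (fun a f => fun p => tau n a (f p)) id w.

Definition is_glide (n : nat) (w : seq int) (k : int) : Prop :=
  forall j : int, (phi n w j = j + k %[mod n%:Z])%Z.

(** i <| j in the (cylindrical) wiring diagram of v|u : wires i and j
    (labelled by their positions 1..n at the cut, taken mod n) cross, j being
    the upper wire, i.e. the one passing from position p+1 to p at a crossing
    of letter a, p = a (mod n).  Before letter number t of vu, the wire in
    position p has starting label phi (take t (v++u)) p, hence cut label
    phi (rev v) (phi (take t (v++u)) p). *)
Definition tri (n : nat) (v u : seq int) (i j : int) : Prop :=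
  exists t : nat, (t < size (v ++ u))%N /\
  exists p : int, (p = nth 0 (v ++ u) t %[mod n%:Z])%Z /\
    (phi n (rev v) (phi n (take t (v ++ u)) p) = i %[mod n%:Z])%Z /\
    (phi n (rev v) (phi n (take t (v ++ u)) (p + 1)) = j %[mod n%:Z])%Z.

Definition ceil_div (M : int) (n : nat) : int := - ((- M) %/ n%:Z)%Z.

(** L is the label of the chamber lying directly above the wire in position e
    in a lifted diagram column whose state is S (position -> wire label):
    the underlying wires are {S p | p <= e} and
    L_i = ceil (max {b in that set | b = i mod n} / n), i = 1..n. *)
Definition chamber_label (n : nat) (S : int -> int) (e : int)
    (L : nat -> int) : Prop :=
  forall i : nat, (1 <= i <= n)%N ->
  exists M : int,
    (exists p, p <= e /\ S p = M) /\ (M = i%:Z %[mod n%:Z])%Z /\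
    (forall p, p <= e -> (S p = i%:Z %[mod n%:Z])%Z -> S p <= M) /\
    L i = ceil_div M n.

(** (t_1,...,t_n) is a representative of t(g) in Z^n / Z(1,...,1), g given by
    the reduced word w: label of the chamber directly above wire 1 at the right
    end minus that at the left end, up to adding a constant vector. *)
Definition traj_rep (n : nat) (w : seq int) (t : nat -> int) : Prop :=
  exists (e : int) (Lr Ll : nat -> int) (c : int),
    phi n w e = 1 /\ chamber_label n (phi n w) e Lr /\
    chamber_label n id 1 Ll /\
    forall i : nat, (1 <= i <= n)%N -> t i = Lr i - Ll i + c.

(* Main.v *)
Require Import Defs.
From HB Require Import structures.
From Stdlib Require Import Classical.
From mathcomp Require Import all_boot all_order all_algebra.
From mathcomp Require Import reals exp zify ring lra.
Import Order.TTheory GRing.Theory Num.Theory.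
Local Open Scope ring_scope.

Lemma small (m x : int) (n : nat) : (2 < n)%N -> x = m * n%:Z -> - n%:Z < x < n%:Z -> x = 0.
Proof. move=> n2 -> /andP[h1 h2].
have n0 : (0 : int) < n%:Z by rewrite ltz_nat; lia.
have [m0|m0|->] := ltgtP m 0; last by rewrite mul0r.
- have : m * n%:Z <= - n%:Z.
    by rewrite -mulN1r ler_pM2r //; lia.
  lia.
- have : n%:Z <= m * n%:Z.
    by rewrite -[X in X <= _]mul1r ler_pM2r //; lia.
  lia.
Qed.

Lemma cmodP (n : nat) (a b : int) :
  (a = b %[mod n%:Z])%Z <-> exists q : int, a = b + q * n%:Z.
Proof.
split.
- move/eqP; rewrite eqz_mod_dvd => /dvdzP [q h]; exists q.
  by rewrite -h addrC subrK.
- move=> [q ->]; apply/eqP; rewrite eqz_mod_dvd; apply/dvdzP; exists q.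
  by rewrite addrC addKr.
Qed.

Lemma cmodbP (n : nat) (a b : int) :
  reflect (exists q : int, a = b + q * n%:Z) ((a == b %[mod n%:Z])%Z).
Proof. by apply: (iffP eqP) => /cmodP. Qed.

Lemma cmod_eq (n : nat) (x y x' y' k : int) :
  x' - y' = x - y + k * n%:Z ->
  ((x' == y' %[mod n%:Z])%Z) = ((x == y %[mod n%:Z])%Z).
Proof.
move=> h; apply/cmodbP/cmodbP => [[q hq]|[q hq]].
- exists (q - k); rewrite mulrBl; lia.
- exists (q + k); rewrite mulrDl; lia.
Qed.

Arguments cmod_eq {n x y x' y' k}.

Lemma cmod_eqP (n : nat) (x y x' y' k : int) :
  x' - y' = x - y + k * n%:Z ->
  (x' = y' %[mod n%:Z])%Z -> (x = y %[mod n%:Z])%Z.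
Proof. by move=> h /eqP; rewrite (cmod_eq h) => /eqP. Qed.

Ltac cong_contra n2 :=
  repeat match goal with
  | H : is_true (_ == _ %[mod _])%Z |- _ => move/cmodbP: H => [? ?]
  | H : (_ == _ %[mod _])%Z = false |- _ => move/negbT/cmodbP: H => H
  end.

Lemma tau_inv (n : nat) a p : (2 < n)%N -> tau n a (tau n a p) = p.
Proof.
move=> n2; rewrite /tau.
case: (cmodbP n p a) => [[q hq]|hq].
- case: (cmodbP n (p+1) a) => [[q' hq']|_].
    by have := @small (q' - q) 1 n n2; rewrite mulrBl; lia.
  case: (cmodbP n (p+1) (a+1)) => [_|[]]; first by rewrite addrK.
  by exists q; lia.
case: (cmodbP n p (a + 1)) => [[q hq1]|hq1].
- case: (cmodbP n (p-1) a) => [_|[]]; first by rewrite subrK.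
  by exists q; lia.
case: (cmodbP n p a) => [//|_].
by case: (cmodbP n p (a + 1)).
Qed.

Lemma tau_per (n : nat) a p q : tau n a (p + q * n%:Z) = tau n a p + q * n%:Z.
Proof.
rewrite /tau (@cmod_eq n p a _ _ q); last by lia.
rewrite (@cmod_eq n p (a+1) (p + q * n%:Z) (a+1) q); last by lia.
by case: ifP => _; [|case: ifP => _]; lia.
Qed.

Lemma tau_shift (n : nat) a k p : tau n (a - k) p = tau n a (p + k) - k.
Proof.
rewrite /tau (@cmod_eq n (p + k) a p (a - k) 0); last by lia.
rewrite (@cmod_eq n (p + k) (a+1) p (a - k + 1) 0); last by lia.
by case: ifP => _; [|case: ifP => _]; lia.
Qed.

Lemma tau_a (n : nat) a : (2 < n)%N -> tau n a a = a + 1.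
Proof. by move=> _; rewrite /tau eqxx. Qed.

Lemma tau_a1 (n : nat) a : (2 < n)%N -> tau n a (a + 1) = a.
Proof.
move=> n2; rewrite /tau eqxx.
case: (cmodbP n (a+1) a) => [[q hq]|_]; last by rewrite addrK.
by have := @small q 1 n n2; lia.
Qed.

Lemma tau_order (n : nat) a q r : (2 < n)%N -> q < r -> tau n a r < tau n a q ->
  r = q + 1 /\ (q = a %[mod n%:Z])%Z.
Proof.
move=> n2 qr; rewrite /tau.
case: (cmodbP n q a) => [[m hm]|hm].
- have hq : (q = a %[mod n%:Z])%Z by apply/cmodP; exists m.
  case: (cmodbP n r a) => [[m' hm']|hm']; first lia.
  case: (cmodbP n r (a+1)) => [[m' hm'']|hm'']; first by split=> //; lia.
  move=> h; have er : r = q + 1 by lia.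
  by exfalso; apply: hm''; exists m; lia.
case: (cmodbP n q (a+1)) => [[m hm1]|hm1];
  case: (cmodbP n r a) => [[m' hm']|hm']; try lia;
  case: (cmodbP n r (a+1)) => [[m' hm'']|hm'']; lia.
Qed.

Lemma phi_cons (n : nat) a w p : phi n (a :: w) p = tau n a (phi n w p).
Proof. by []. Qed.

Lemma phi_cat (n : nat) w1 w2 p : phi n (w1 ++ w2) p = phi n w1 (phi n w2 p).
Proof. by elim: w1 => //= a w1 IH; rewrite IH. Qed.

Lemma phi_rcons (n : nat) w a p : phi n (rcons w a) p = phi n w (tau n a p).
Proof. by rewrite -cats1 phi_cat. Qed.

Lemma phi_revK (n : nat) w p : (2 < n)%N -> phi n (rev w) (phi n w p) = p.
Proof.
move=> n2; elim: w p => //= a w IH p.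
by rewrite rev_cons phi_rcons tau_inv.
Qed.

Lemma phi_Krev (n : nat) w p : (2 < n)%N -> phi n w (phi n (rev w) p) = p.
Proof. by move=> n2; rewrite -{1}(revK w) phi_revK. Qed.

Lemma phi_per (n : nat) w p q : phi n w (p + q * n%:Z) = phi n w p + q * n%:Z.
Proof. by elim: w => //= a w IH; rewrite IH tau_per. Qed.

Lemma phi_shift (n : nat) w k p :
  phi n (map (fun j => j - k) w) p = phi n w (p + k) - k.
Proof. by elim: w => /= [|a w IH]; [lia | rewrite IH tau_shift subrK]. Qed.

Lemma glide_rev (n : nat) w k : (2 < n)%N -> is_glide n w k ->
  forall x, (phi n (rev w) x = x - k %[mod n%:Z])%Z.
Proof.
move=> n2 hg x; have := hg (phi n (rev w) x); rewrite phi_Krev //.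
move/cmodP=> [q hq]; apply/cmodP; exists (-q); rewrite mulNr; lia.
Qed.

Lemma glide_shift (n : nat) w k : is_glide n w k ->
  is_glide n (map (fun j => j - k) w) k.
Proof.
move=> hg j; rewrite phi_shift; have /cmodP [q hq] := hg (j + k).
by apply/cmodP; exists q; lia.
Qed.

Definition rep (n : nat) (x : int) : nat := (absz ((x - 1) %% n%:Z)%Z).+1.

Lemma rep_range (n : nat) x : (2 < n)%N -> (1 <= rep n x <= n)%N.
Proof.
move=> n2; rewrite /rep /=.
have n0 : n%:Z != 0 by rewrite eqz_nat; lia.
have h1 := modz_ge0 (x - 1) n0; have h2 := ltz_mod (x - 1) n0.
lia.
Qed.

Lemma rep_cong (n : nat) x : (2 < n)%N -> ((rep n x)%:Z = x %[mod n%:Z])%Z.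
Proof.
move=> n2; rewrite /rep.
have n0 : n%:Z != 0 by rewrite eqz_nat; lia.
have h1 := modz_ge0 (x - 1) n0.
have -> : ((absz ((x - 1) %% n%:Z)%Z).+1 : int) = ((x - 1) %% n%:Z)%Z + 1 by lia.
by rewrite modzDml subrK.
Qed.

Lemma rep_eq (n : nat) x (i : nat) : (2 < n)%N -> (1 <= i <= n)%N ->
  (x = i%:Z %[mod n%:Z])%Z -> rep n x = i.
Proof.
move=> n2 hi hx; rewrite /rep.
have -> : ((x - 1) %% n%:Z)%Z = ((i%:Z - 1) %% n%:Z)%Z.
  by rewrite -modzDml hx modzDml.
rewrite modz_small; first lia.
apply/andP; split; lia.
Qed.

Lemma mult_pos (n : nat) (x : int) : (2 < n)%N -> (x = 0 %[mod n%:Z])%Z -> 0 < x -> n%:Z <= x.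
Proof.
move=> n2 /cmodP [q ->]; rewrite add0r => h.
have n0 : (0 : int) < n%:Z by rewrite ltz_nat; lia.
have q0 : 0 < q by rewrite -(pmulr_lgt0 _ n0).
by rewrite -[X in X <= _]mul1r ler_pM2r //; lia.
Qed.

Definition ceil_add (M r : int) (n : nat) : (0 < n)%N ->
  ceil_div (M + r * n%:Z) n = ceil_div M n + r.
Proof.
move=> n0; rewrite /ceil_div opprD -mulNr addrC divzMDl; last by rewrite eqz_nat; lia.
by rewrite opprD opprK addrC.
Qed.

Lemma traj_glide (n : nat) w k t : (2 < n)%N -> is_glide n w k -> traj_rep n w t ->
  exists c : int, forall i : nat, (1 <= i <= n)%N ->
    t i * n%:Z = (phi n (rev w) 1 - 1) - (phi n (rev w) i%:Z - i%:Z) + c * n%:Z.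
Proof.
move=> n2 hg [e [Lr [Ll [c [he [hr [hl ht]]]]]]].
exists c => i hi.
set g := phi n (rev w).
have ge : g 1 = e by rewrite /g -he phi_revK.
have gper : forall x q, g (x + q * n%:Z) = g x + q * n%:Z by move=> x q; apply: phi_per.
have gcong : forall x, (g x = x - k %[mod n%:Z])%Z := @glide_rev n w k n2 hg.
have dper : forall x y, (x = y %[mod n%:Z])%Z -> g x - x = g y - y.
  move=> x y /cmodP [q ->]; rewrite gper; lia.
have [r hr1] : exists r : int, (g 1 - 1) - (g i%:Z - i%:Z) = r * n%:Z.
  have /cmodP [q1 h1] := gcong 1; have /cmodP [q2 h2] := gcong i%:Z.
  exists (q1 - q2); rewrite mulrBl; lia.
have [M0 [[p0 [hp0 hp0']] [hM0 [hmax0 hLl]]]] := hl i hi.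
have [M [[p [hp hpM]] [hM [hmax hLr]]]] := hr i hi.
simpl in hp0'; subst p0.
have eM : M = M0 + r * n%:Z.
  apply/eqP; rewrite eq_le; apply/andP; split.
  - have gM : g M = p by rewrite -hpM /g phi_revK.
    have dM := dper M i%:Z hM.
    have : M - r * n%:Z <= M0.
      apply: (hmax0 (M - r * n%:Z)); first lia.
      rewrite /id; by apply/cmodP; move/cmodP: hM => [q hq]; exists (q - r); rewrite mulrBl; lia.
    lia.
  - set y := M0 + r * n%:Z.
    have hy : (y = i%:Z %[mod n%:Z])%Z.
      by apply/cmodP; move/cmodP: hM0 => [q hq]; exists (q + r); rewrite /y mulrDl; lia.
    have := hmax (g y).
    rewrite /g phi_Krev // -/g.
    apply=> //.
    have := dper y i%:Z hy.
    lia.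
rewrite ht // hLr hLl eM ceil_add; last lia.
rewrite mulrDl hr1; lia.
Qed.

Definition Pt (n : nat) (v u : seq int) (t : nat) (x : int) : int :=
  phi n (rev (take t (v ++ u))) x.

Lemma Pt_step (n : nat) v u t x : (t < size (v ++ u))%N ->
  Pt n v u t.+1 x = tau n (nth 0 (v ++ u) t) (Pt n v u t x).
Proof. by move=> ht; rewrite /Pt (take_nth 0 ht) rev_rcons. Qed.

Lemma Pt_label (n : nat) v u t x : (2 < n)%N ->
  phi n (take t (v ++ u)) (Pt n v u t x) = x.
Proof. by move=> n2; rewrite /Pt phi_Krev. Qed.

Lemma Pt_inj (n : nat) v u t x y : (2 < n)%N -> Pt n v u t x = Pt n v u t y -> x = y.
Proof. by move=> n2 h; rewrite -(Pt_label n v u t x n2) h Pt_label. Qed.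

Lemma Pt_v (n : nat) v u x : Pt n v u (size v) x = phi n (rev v) x.
Proof. by rewrite /Pt take_size_cat. Qed.

Lemma Pt_0 (n : nat) v u x : Pt n v u 0 x = x.
Proof. by rewrite /Pt take0. Qed.

Lemma Pt_end (n : nat) v u x :
  Pt n v u (size (v ++ u)) x = phi n (rev u) (phi n (rev v) x).
Proof. by rewrite /Pt take_size rev_cat phi_cat. Qed.

Lemma cross_tri (n : nat) v u t x y : (2 < n)%N -> (t < size (v ++ u))%N ->
  Pt n v u t x < Pt n v u t y -> Pt n v u t.+1 y < Pt n v u t.+1 x ->
  tri n v u (rep n (Pt n v u (size v) x))%:Z (rep n (Pt n v u (size v) y))%:Z.
Proof.
move=> n2 ht hxy; rewrite !Pt_step // => hs.
have [e1 e2] := @tau_order _ _ _ _ n2 hxy hs.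
exists t; split => //; exists (Pt n v u t x); split => //.
rewrite -e1 !Pt_label // !Pt_v.
split; apply/eqP; rewrite eq_sym; apply/eqP; apply: (@rep_cong n _ n2).
Qed.

Lemma cross_ivt (n : nat) v u t1 t2 x y : (2 < n)%N -> (t1 <= t2)%N ->
  Pt n v u t1 x < Pt n v u t1 y -> Pt n v u t2 y < Pt n v u t2 x ->
  exists t, [/\ (t1 <= t)%N, (t < t2)%N, Pt n v u t x < Pt n v u t y &
    Pt n v u t.+1 y < Pt n v u t.+1 x].
Proof.
move=> n2; elim: t2 => [|s IH].
  by rewrite leqn0 => /eqP -> h1 h2; have := lt_trans h1 h2; rewrite ltxx.
rewrite leq_eqVlt => /orP [/eqP <- h1 h2|].
  by have := lt_trans h1 h2; rewrite ltxx.
rewrite ltnS => hs h1 h2.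
have [hlt|hgt|heq] := ltgtP (Pt n v u s x) (Pt n v u s y).
- by exists s; split => //.
- have [t [a1 a2 a3 a4]] := IH hs h1 hgt.
  by exists t; split => //; apply: ltnW.
- have exy := @Pt_inj n v u s x y n2 heq.
  by move: h1; rewrite exy ltxx.
Qed.

Lemma phi_disp (n : nat) w x y : (x = y %[mod n%:Z])%Z ->
  phi n w x - x = phi n w y - y.
Proof. move=> /cmodP [q ->]; rewrite phi_per; lia. Qed.

Lemma disp_mult (n : nat) w k i j : (2 < n)%N -> is_glide n w k ->
  ((phi n (rev w) i - i) - (phi n (rev w) j - j) = 0 %[mod n%:Z])%Z.
Proof.
move=> n2 hg; have /cmodP [q1 h1] := @glide_rev n w k n2 hg i.
have /cmodP [q2 h2] := @glide_rev n w k n2 hg j.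
apply/cmodP; exists (q1 - q2); rewrite mulrBl; lia.
Qed.

Lemma other_lift (n : nat) (i j : nat) : (2 < n)%N -> (1 <= i <= n)%N -> (1 <= j <= n)%N ->
  i <> j -> exists y : int, [/\ (y = j%:Z %[mod n%:Z])%Z, i%:Z < y & y < i%:Z + n%:Z].
Proof.
move=> n2 hi hj hij.
have [lt|gt|eq] := ltngtP i j.
- exists j%:Z; split => //; lia.
- exists (j%:Z + n%:Z); split; try lia.
  by apply/cmodP; exists 1; lia.
- by [].
Qed.

Section Cross.
Variables (R : realType) (alpha : nat -> R).

Lemma cross_alpha (n : nat) v u t1 t2 x y : (2 < n)%N ->
  (forall i j : nat, (1 <= i <= n)%N -> (1 <= j <= n)%N ->
     tri n v u i%:Z j%:Z -> alpha i < alpha j) ->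
  (t1 <= t2)%N -> (t2 <= size (v ++ u))%N ->
  Pt n v u t1 x < Pt n v u t1 y -> Pt n v u t2 y < Pt n v u t2 x ->
  alpha (rep n (Pt n v u (size v) x)) < alpha (rep n (Pt n v u (size v) y)).
Proof.
move=> n2 Ha h12 h2 hx hy.
have [t [a1 a2 a3 a4]] := @cross_ivt n v u t1 t2 x y n2 h12 hx hy.
apply: Ha; try apply: (@rep_range n _ n2).
exact: (@cross_tri n v u t x y n2 (leq_trans a2 h2) a3 a4).
Qed.

Lemma u_order (n : nat) v u k1 (i j : nat) : (2 < n)%N ->
  (forall i j : nat, (1 <= i <= n)%N -> (1 <= j <= n)%N ->
     tri n v u i%:Z j%:Z -> alpha i < alpha j) ->
  is_glide n u k1 -> (1 <= i <= n)%N -> (1 <= j <= n)%N ->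
  phi n (rev u) j%:Z - j%:Z < phi n (rev u) i%:Z - i%:Z -> alpha i < alpha j.
Proof.
move=> n2 Ha hg hi hj hd.
have hij : i <> j by move=> e; move: hd; rewrite e ltxx.
have [y [hy1 hy2 hy3]] := @other_lift n i j n2 hi hj hij.
have hm' := @mult_pos n _ n2 (@disp_mult n u k1 i j n2 hg) (_ : 0 < _).
have {hm'} hm' := hm' ltac:(by rewrite subr_gt0).
have dy := @phi_disp n (rev u) _ _ hy1.
have := @cross_alpha n v u (size v) (size (v ++ u)) (phi n v i%:Z) (phi n v y) n2 Ha.
rewrite !Pt_v !Pt_end !phi_revK // size_cat leq_addr leqnn.
move=> /(_ isT isT hy2) => h.
have : alpha (rep n i%:Z) < alpha (rep n y) by apply: h; lia.
by rewrite (@rep_eq n y j n2 hj hy1) (@rep_eq n i%:Z i n2 hi (erefl _)).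
Qed.

Lemma shift_rev (n : nat) v k x :
  phi n (rev [seq j - k | j <- v]) x = phi n (rev v) (x + k) - k.
Proof. by rewrite -map_rev phi_shift. Qed.

Lemma v_order (n : nat) v u k2 (i j : nat) : (2 < n)%N ->
  (forall i j : nat, (1 <= i <= n)%N -> (1 <= j <= n)%N ->
     tri n v u i%:Z j%:Z -> alpha i < alpha j) ->
  is_glide n v k2 -> (1 <= i <= n)%N -> (1 <= j <= n)%N ->
  let G := phi n (rev [seq j - k2 | j <- v]) in
  G j%:Z - j%:Z < G i%:Z - i%:Z -> alpha i < alpha j.
Proof.
move=> n2 Ha hg hi hj G hd.
have hg' := @glide_shift n v k2 hg.
have hij : i <> j by move=> e; move: hd; rewrite e ltxx.
have [y [hy1 hy2 hy3]] := @other_lift n i j n2 hi hj hij.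
have hm' : n%:Z <= (G i%:Z - i%:Z) - (G j%:Z - j%:Z).
  apply: (@mult_pos n _ n2 (@disp_mult n _ k2 i j n2 hg')).
  by rewrite subr_gt0.
have dy : G y - y = G j%:Z - j%:Z := @phi_disp n (rev [seq j - k2 | j <- v]) _ _ hy1.
have Gi : phi n (rev v) (i%:Z + k2) = G i%:Z + k2 by rewrite /G shift_rev subrK.
have Gy : phi n (rev v) (y + k2) = G y + k2 by rewrite /G shift_rev subrK.
have := @cross_alpha n v u 0 (size v) (i%:Z + k2) (y + k2) n2 Ha.
rewrite !Pt_v !Pt_0 size_cat leq_addr leq0n Gi Gy.
move=> /(_ isT isT) => h.
have : alpha (rep n (G i%:Z + k2)) < alpha (rep n (G y + k2)).
  apply: h; lia.
have /cmodP [q1 h1] := @glide_rev n _ k2 n2 hg' i%:Z.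
have /cmodP [q2 h2] := @glide_rev n _ k2 n2 hg' y.
rewrite (@rep_eq n (G i%:Z + k2) i n2 hi); last first.
  by apply/cmodP; exists q1; rewrite /G h1; lia.
rewrite (@rep_eq n (G y + k2) j n2 hj) //.
move/cmodP: hy1 => [q3 h3].
by apply/cmodP; exists (q2 + q3); rewrite /G h2 mulrDl; lia.
Qed.
End Cross.

Lemma all_disp_eq (n : nat) (g : int -> int) : (2 < n)%N ->
  (forall x y, (x = y %[mod n%:Z])%Z -> g x - x = g y - y) ->
  ~ (exists i j : nat, [/\ (1 <= i <= n)%N, (1 <= j <= n)%N & g j%:Z - j%:Z < g i%:Z - i%:Z]) ->
  forall x, g x - x = g 1 - 1.
Proof.
move=> n2 hd hne x.
rewrite -(hd _ _ (@rep_cong n x n2)).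
have h1 : (1 <= 1 <= n)%N by lia.
have hr := @rep_range n x n2.
apply/eqP; rewrite eq_le; apply/andP; split; rewrite leNgt; apply/negP => h; apply: hne.
- by exists (rep n x), 1%N; split.
- by exists 1%N, (rep n x); split.
Qed.

Section NC.
Variables (R : realType) (alpha : nat -> R).

Lemma u_nonconst (n : nat) v u : (2 < n)%N ->
  (forall i j : nat, (1 <= i <= n)%N -> (1 <= j <= n)%N ->
     tri n v u i%:Z j%:Z -> alpha i < alpha j) ->
  u != [::] ->
  exists i j : nat, [/\ (1 <= i <= n)%N, (1 <= j <= n)%N &
    phi n (rev u) j%:Z - j%:Z < phi n (rev u) i%:Z - i%:Z].
Proof.
move=> n2 Ha hu; apply: NNPP => hne.
have hall := @all_disp_eq n _ n2 (fun x y h => @phi_disp n (rev u) x y h) hne.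
case: u hu Ha hne hall => [//|a u'] _ Ha hne hall.
set W := v ++ a :: u'.
have hs : (size v < size W)%N by rewrite /W size_cat /= addnS ltnS leq_addr.
have nth_a : nth 0 W (size v) = a by rewrite /W nth_cat ltnn subnn.
have P1 : forall x, Pt n v (a :: u') (size v).+1 (phi n v x) = tau n a x.
  by move=> x; rewrite Pt_step // nth_a Pt_v phi_revK.
have := @cross_alpha R alpha n v (a :: u') (size v) (size v).+1 (phi n v a) (phi n v (a + 1)) n2 Ha.
rewrite !Pt_v !phi_revK // !P1 tau_a // tau_a1 // leqnSn hs.
move=> /(_ isT isT) => h1; have {h1} h1 := h1 ltac:(lia) ltac:(lia).
have := @cross_alpha R alpha n v (a :: u') (size v).+1 (size W) (phi n v (a + 1)) (phi n v a) n2 Ha.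
rewrite !Pt_v !phi_revK // !P1 tau_a // tau_a1 // hs leqnn !Pt_end !phi_revK //.
have e1 := hall a; have e2 := hall (a + 1).
move=> /(_ isT isT) => h2; have {h2} h2 := h2 ltac:(lia) ltac:(lia).
by have := lt_trans h1 h2; rewrite ltxx.
Qed.

Lemma v_nonconst (n : nat) v u k2 : (2 < n)%N ->
  (forall i j : nat, (1 <= i <= n)%N -> (1 <= j <= n)%N ->
     tri n v u i%:Z j%:Z -> alpha i < alpha j) ->
  v != [::] ->
  let G := phi n (rev [seq j - k2 | j <- v]) in
  exists i j : nat, [/\ (1 <= i <= n)%N, (1 <= j <= n)%N &
    G j%:Z - j%:Z < G i%:Z - i%:Z].
Proof.
move=> n2 Ha hv G; apply: NNPP => hne.
have hall := @all_disp_eq n _ n2 (fun x y h => @phi_disp n (rev [seq j - k2 | j <- v]) x y h) hne.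
have HG : forall x, phi n (rev v) x = x + (G 1 - 1).
  move=> x; have e : G (x - k2) - (x - k2) = G 1 - 1 := hall (x - k2).
  have s : G (x - k2) = phi n (rev v) x - k2 by rewrite /G shift_rev subrK.
  lia.
have [D HD] : exists D, forall x, phi n (rev v) x = x + D by exists (G 1 - 1).
clear HG hne hall G.
case: v hv Ha HD => [//|a v'] _ Ha HG.
set W := (a :: v') ++ u.
have hs : (0 < size W)%N by [].
have P1 : forall x, Pt n (a :: v') u 1 x = tau n a x.
  by move=> x; rewrite Pt_step // Pt_0.
have := @cross_alpha R alpha n (a :: v') u 0 1 a (a + 1) n2 Ha.
rewrite !Pt_v !Pt_0 !P1 tau_a // tau_a1 // !HG.
move=> /(_ isT isT) => h1; have {h1} h1 := h1 ltac:(lia) ltac:(lia).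
have := @cross_alpha R alpha n (a :: v') u 1 (size (a :: v')) (a + 1) a n2 Ha.
rewrite !Pt_v !P1 tau_a // tau_a1 // !HG size_cat leq_addr.
move=> /(_ isT isT) => h2; have {h2} h2 := h2 ltac:(lia) ltac:(lia).
by have := lt_trans h1 h2; rewrite ltxx.
Qed.
End NC.
Lemma sum_le0n (R : numDomainType) (F : nat -> R) m :
  (forall j, (1 <= j <= m)%N -> F j <= 0) -> \sum_(1 <= j < m.+1) F j <= 0.
Proof.
move=> h; rewrite big_seq; apply: sumr_le0 => j; rewrite mem_index_iota => hj.
by apply: h; lia.
Qed.

Lemma sum_lt0n (R : numDomainType) (F : nat -> R) m :
  (forall j, (1 <= j <= m)%N -> F j <= 0) ->
  (exists j, (1 <= j <= m)%N /\ F j < 0) -> \sum_(1 <= j < m.+1) F j < 0.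
Proof.
elim: m => [|m IH] h [j [hj hF]]; first lia.
rewrite big_nat_recr //=.
have [ej|nej] := eqVneq j m.+1.
- subst j; rewrite -[X in _ < X]addr0; apply: ler_ltD => //.
  by apply: sum_le0n => k hk; apply: h; lia.
- rewrite -[X in _ < X]addr0; apply: ltr_leD; last by apply: h; lia.
  apply: IH; first by move=> k hk; apply: h; lia.
  by exists j; split => //; lia.
Qed.

Lemma intr_natZ (R : pzRingType) (n : nat) : ((n%:Z)%:~R : R) = n%:R.
Proof. by []. Qed.

Lemma key (R : realType) (n : nat) (lam : nat -> R) (d t : nat -> int) (c0 : int) :
  (0 < n)%N ->
  (forall j, (1 <= j <= n)%N -> lam j != 0) ->
  \sum_(1 <= j < n.+1) lam j = 0 ->
  (forall i j, (1 <= i <= n)%N -> (1 <= j <= n)%N -> 0 < lam i -> lam j < 0 -> d i <= d j) ->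
  (exists i j, [/\ (1 <= i <= n)%N, (1 <= j <= n)%N & d j < d i]) ->
  (forall i, (1 <= i <= n)%N -> t i * n%:Z = d 1%N - d i + c0 * n%:Z) ->
  0 < \sum_(1 <= j < n.+1) (t j)%:~R * lam j.
Proof.
move=> n0 hnz hsum H [i0 [j0 [hi0 hj0 hd0]]] ht.
pose pos j := if 0 < lam j then lam j else 0.
pose neg j := if lam j < 0 then - lam j else 0.
have lamE : forall j, lam j = pos j - neg j.
  move=> j; rewrite /pos /neg; have [h|h|h] := ltrgtP (lam j) 0.
  - by rewrite sub0r opprK.
  - by rewrite subr0.
  - by rewrite h subr0.
have pos0 : forall j, 0 <= pos j by move=> j; rewrite /pos; case: ifP => // /ltW.
have neg0 : forall j, 0 <= neg j by move=> j; rewrite /neg; case: ifP => // h; rewrite oppr_ge0 ltW.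
set S := \sum_(1 <= j < n.+1) neg j.
have hS0 : 0 <= S by apply: sumr_ge0.
have hSp : \sum_(1 <= j < n.+1) pos j = S.
  have : \sum_(1 <= j < n.+1) lam j = \sum_(1 <= j < n.+1) pos j - S.
    by rewrite /S -sumrB; apply: eq_bigr => j _; rewrite lamE.
  by rewrite hsum => /eqP; rewrite eq_sym subr_eq0 => /eqP.
have [ip [hip lip]] : exists ip, (1 <= ip <= n)%N /\ 0 < lam ip.
  apply: NNPP => hne.
  have : \sum_(1 <= j < n.+1) lam j < 0.
    apply: sum_lt0n.
      move=> j hj; rewrite leNgt; apply/negP => hl; apply: hne; by exists j.
    exists 1%N; split; first lia.
    rewrite lt_neqAle hnz /=; last lia.
    rewrite leNgt; apply/negP => hl; apply: hne; exists 1%N; split => //; lia.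
  by rewrite hsum ltxx.
have [jn [hjn ljn]] : exists jn, (1 <= jn <= n)%N /\ lam jn < 0.
  apply: NNPP => hne.
  have : \sum_(1 <= j < n.+1) (- lam j) < 0.
    apply: sum_lt0n.
      move=> j hj; rewrite oppr_le0 leNgt; apply/negP => hl; apply: hne; by exists j.
    exists 1%N; split; first lia.
    rewrite oppr_lt0 lt_neqAle eq_sym hnz /=; last lia.
    rewrite leNgt; apply/negP => hl; apply: hne; exists 1%N; split => //; lia.
  by rewrite sumrN hsum oppr0 ltxx.
have [a [b [ha hb la lb hab]]] : exists a b, [/\ (1 <= a <= n)%N, (1 <= b <= n)%N,
    0 < lam a, lam b < 0 & d a < d b].
  have := hnz i0 hi0; have := hnz j0 hj0.
  case: (ltrgtP (lam j0) 0) => // lj0 _; case: (ltrgtP (lam i0) 0) => // li0 _.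
  - have := H ip j0 hip hj0 lip lj0 => hh.
    by exists ip, i0; split => //; apply: le_lt_trans hh hd0.
  - by have := H i0 j0 hi0 hj0 li0 lj0; rewrite leNgt hd0.
  - by exists j0, i0; split.
  - have := H i0 jn hi0 hjn li0 ljn => hh.
    by exists j0, jn; split => //; apply: lt_le_trans hd0 hh.
set T := \sum_(1 <= i < n.+1) \sum_(1 <= j < n.+1)
   pos i * neg j * ((d i)%:~R - (d j)%:~R).
have Gle : forall i j, (1 <= i <= n)%N -> (1 <= j <= n)%N ->
    pos i * neg j * ((d i)%:~R - (d j)%:~R) <= 0 :> R.
  move=> i j hi hj; rewrite /pos /neg.
  case: ifP => hpi; last by rewrite !mul0r.
  case: ifP => hnj; last by rewrite mulr0 mul0r.
  apply: mulr_ge0_le0; first by apply: mulr_ge0; [exact: ltW | rewrite oppr_ge0 ltW].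
  by rewrite subr_le0 ler_int; apply: H.
have hT : T < 0.
  apply: sum_lt0n.
    by move=> i hi; apply: sum_le0n => j hj; apply: Gle.
  exists a; split => //; apply: sum_lt0n; first by move=> j hj; apply: Gle.
  exists b; split => //; rewrite /pos /neg la lb.
  rewrite -mulrA pmulr_rlt0 // pmulr_rlt0 ?oppr_gt0 //.
  by rewrite subr_lt0 ltr_int.
have TE : T = S * \sum_(1 <= j < n.+1) lam j * (d j)%:~R.
  rewrite /T.
  transitivity (\sum_(1 <= i < n.+1) (pos i * (d i)%:~R * S - pos i * \sum_(1 <= j < n.+1) neg j * (d j)%:~R)).
    apply: eq_bigr => i _; rewrite /S !mulr_sumr -sumrB.
    by apply: eq_bigr => j _; ring.
  rewrite sumrB -mulr_suml -mulr_suml hSp.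
  have -> : \sum_(1 <= j < n.+1) lam j * (d j)%:~R =
     \sum_(1 <= j < n.+1) pos j * (d j)%:~R - \sum_(1 <= j < n.+1) neg j * (d j)%:~R.
    by rewrite -sumrB; apply: eq_bigr => j _; rewrite lamE mulrBl.
  ring.
have hLD : \sum_(1 <= j < n.+1) lam j * (d j)%:~R < 0.
  rewrite ltNge; apply/negP => h.
  by have := mulr_ge0 hS0 h; rewrite -TE leNgt hT.
have E : (\sum_(1 <= j < n.+1) (t j)%:~R * lam j) * n%:R =
          - \sum_(1 <= j < n.+1) lam j * (d j)%:~R.
  rewrite mulr_suml.
  transitivity (\sum_(1 <= j < n.+1) (((d 1%N)%:~R + (c0%:~R * n%:R)) * lam j - lam j * (d j)%:~R)).
    apply: eq_big_nat => j hj.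
    have := congr1 (fun z : int => z%:~R : R) (ht j ltac:(lia)).
    rewrite /= !intrM !intrD intrN !intrM !intr_natZ => e.
    transitivity ((t j)%:~R * n%:R * lam j); first ring.
    by rewrite e; ring.
  by rewrite sumrB -mulr_sumr hsum mulr0 sub0r.
have nR : (0 : R) < n%:R by rewrite ltr0n.
have : 0 < (\sum_(1 <= j < n.+1) (t j)%:~R * lam j) * n%:R by rewrite E oppr_gt0.
by rewrite pmulr_lgt0.
Qed.
Lemma prod_pos (R : realType) (F : nat -> R) m :
  (forall j, (1 <= j <= m)%N -> 0 < F j) -> 0 < \prod_(1 <= j < m.+1) F j.
Proof.
move=> h; rewrite big_seq; apply: prodr_gt0 => j; rewrite mem_index_iota => hj.
by apply: h; lia.
Qed.

Lemma prod_nz (R : realType) (F : nat -> R) m :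
  (forall j, (1 <= j <= m)%N -> F j != 0) -> \prod_(1 <= j < m.+1) F j != 0.
Proof.
elim: m => [|m IH] h; first by rewrite big_geq // oner_neq0.
rewrite big_nat_recr //= mulf_neq0 //; last by apply: h; lia.
by apply: IH => j hj; apply: h; lia.
Qed.

Lemma ln_prod (R : realType) (F : nat -> R) m :
  (forall j, (1 <= j <= m)%N -> 0 < F j) ->
  ln (\prod_(1 <= j < m.+1) F j) = \sum_(1 <= j < m.+1) ln (F j).
Proof.
elim: m => [|m IH] h; first by rewrite !big_geq // ln1.
rewrite big_nat_recr // [in RHS]big_nat_recr //= lnM ?IH //; first by move=> j hj; apply: h; lia.
- by rewrite posrE; apply: prod_pos => j hj; apply: h; lia.
- by rewrite posrE; apply: h; lia.
Qed.

Lemma side (R : realType) (n : nat) (alpha : nat -> R) (b c : R) (d t : nat -> int) (c0 : int) :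
  (0 < n)%N -> b < c ->
  (forall j, (1 <= j <= n)%N -> alpha j < b \/ c < alpha j) ->
  \prod_(1 <= j < n.+1) (b - alpha j) = \prod_(1 <= j < n.+1) (c - alpha j) ->
  (forall i j, (1 <= i <= n)%N -> (1 <= j <= n)%N -> d j < d i -> alpha i < alpha j) ->
  (exists i j, [/\ (1 <= i <= n)%N, (1 <= j <= n)%N & d j < d i]) ->
  (forall i, (1 <= i <= n)%N -> t i * n%:Z = d 1%N - d i + c0 * n%:Z) ->
  0 < \sum_(1 <= j < n.+1) (t j)%:~R * ln ((b - alpha j) / (c - alpha j)).
Proof.
move=> n0 hbc hout hprod hord hnc ht.
have Bpos : forall j, (1 <= j <= n)%N -> 0 < (b - alpha j) / (c - alpha j).
  move=> j hj; case: (hout j hj) => h.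
  - by apply: divr_gt0; rewrite subr_gt0 //; apply: lt_trans h hbc.
  - rewrite -mulrNN -invrN; apply: divr_gt0; rewrite oppr_gt0 subr_lt0 //.
    exact: lt_trans hbc h.
have sgn : forall j, (1 <= j <= n)%N ->
    (alpha j < b /\ ln ((b - alpha j) / (c - alpha j)) < 0) \/
    (c < alpha j /\ 0 < ln ((b - alpha j) / (c - alpha j))).
  move=> j hj; case: (hout j hj) => h; [left|right]; split => //.
  - apply: ln_lt0; rewrite Bpos //=.
    have cp : 0 < c - alpha j by rewrite subr_gt0; apply: lt_trans h hbc.
    by rewrite ltr_pdivrMr // mul1r ltrD2r.
  - apply: ln_gt0.
    rewrite -mulrNN -invrN.
    have cp : 0 < - (c - alpha j) by rewrite oppr_gt0 subr_lt0.
    by rewrite ltr_pdivlMr // mul1r ltrN2 ltrD2r.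
apply: (@key R n (fun j => ln ((b - alpha j) / (c - alpha j))) d t c0 n0) => //.
- move=> j hj; case: (sgn j hj) => [[_ h]|[_ h]]; [exact: ltr0_neq0 | exact: lt0r_neq0].
- rewrite -ln_prod //.
  have cnz : \prod_(1 <= j < n.+1) (c - alpha j) != 0.
    apply: prod_nz => j hj; rewrite subr_eq0; apply/eqP => e.
    by case: (hout j hj); rewrite -e ?ltxx // => h; move: (lt_trans h hbc); rewrite ltxx.
  by rewrite prodf_div hprod divff // ln1.
- move=> i j hi hj li lj; rewrite leNgt; apply/negP => hd.
  have := hord i j hi hj hd.
  case: (sgn i hi) => [[_ h]|[h1 _]]; first by move: li; rewrite ltNge (ltW h).
  case: (sgn j hj) => [[h2 _]|[_ h]]; last by move: lj; rewrite ltNge (ltW h).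
  move=> h3; have := lt_trans (lt_trans h2 hbc) h1.
  by rewrite ltNge (ltW h3).
Qed.

Theorem proposition8p5 (R : realType) (n : nat) (u v : seq int) (k2 : int)
    (alpha : nat -> R) (t t' : nat -> int) (b c : R) :
  (2 < n)%N ->
  u != [::] -> v != [::] ->
  reduced n u -> reduced n v ->
  (exists k1 : int, is_glide n u k1) -> is_glide n v k2 ->
  reduced n (v ++ u) ->
  (forall i j : nat, (1 <= i <= n)%N -> (1 <= j <= n)%N ->
     tri n v u i%:Z j%:Z -> alpha i < alpha j) ->
  traj_rep n u t ->
  traj_rep n [seq j - k2 | j <- v] t' ->
  b != c ->
  (forall j : nat, (1 <= j <= n)%N ->
     ~ (Num.min b c <= alpha j <= Num.max b c)) ->
  \prod_(1 <= j < n.+1) (b - alpha j) = \prod_(1 <= j < n.+1) (c - alpha j) ->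
  let B := fun j : nat => (b - alpha j) / (c - alpha j) in
  0 < (\sum_(1 <= j < n.+1) (t' j)%:~R * ln (B j)) /
      (\sum_(1 <= j < n.+1) (t j)%:~R * ln (B j)).
Proof.
move=> n2 hu hv _ _ [k1 hg1] hg2 _ Ha htr htr' hbc hout hprod.
cbv zeta.
set B := (fun j : nat => (b - alpha j) / (c - alpha j)).
have n0 : (0 < n)%N by lia.
have [c1 hc1] := @traj_glide n u k1 t n2 hg1 htr.
have [c2 hc2] := @traj_glide n _ k2 t' n2 (@glide_shift n v k2 hg2) htr'.
set d := fun i : nat => phi n (rev u) i%:Z - i%:Z.
set G := phi n (rev [seq j - k2 | j <- v]).
set d' := fun i : nat => G i%:Z - i%:Z.
have ncu : exists i j, [/\ (1 <= i <= n)%N, (1 <= j <= n)%N & d j < d i].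
  exact: (@u_nonconst R alpha n v u n2 Ha hu).
have ncv : exists i j, [/\ (1 <= i <= n)%N, (1 <= j <= n)%N & d' j < d' i].
  exact: (@v_nonconst R alpha n v u k2 n2 Ha hv).
have ordu : forall i j, (1 <= i <= n)%N -> (1 <= j <= n)%N -> d j < d i -> alpha i < alpha j.
  by move=> i j hi hj; apply: (@u_order R alpha n v u k1 i j n2 Ha hg1 hi hj).
have ordv : forall i j, (1 <= i <= n)%N -> (1 <= j <= n)%N -> d' j < d' i -> alpha i < alpha j.
  by move=> i j hi hj; apply: (@v_order R alpha n v u k2 i j n2 Ha hg2 hi hj).
have htu : forall i, (1 <= i <= n)%N -> t i * n%:Z = d 1%N - d i + c1 * n%:Z.
  by move=> i hi; rewrite hc1.
have htv : forall i, (1 <= i <= n)%N -> t' i * n%:Z = d' 1%N - d' i + c2 * n%:Z.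
  by move=> i hi; rewrite hc2.
have [lt|gt|eq] := ltgtP b c; last by move: hbc; rewrite eq eqxx.
- have ho : forall j, (1 <= j <= n)%N -> alpha j < b \/ c < alpha j.
    move=> j hj; have hn := hout j hj.
    have e1 : Num.min b c = b by apply: min_l; exact: ltW.
    have e2 : Num.max b c = c by apply: max_r; exact: ltW.
    rewrite e1 e2 in hn.
    case: (ltP (alpha j) b) => h1; first by left.
    case: (ltP c (alpha j)) => h2; first by right.
    by exfalso; apply: hn; rewrite h1 h2.
  apply: divr_gt0.
  + exact: (@side R n alpha b c d' t' c2 n0 lt ho hprod ordv ncv htv).
  + exact: (@side R n alpha b c d t c1 n0 lt ho hprod ordu ncu htu).
- have ho : forall j, (1 <= j <= n)%N -> alpha j < c \/ b < alpha j.
    move=> j hj; have hn := hout j hj.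
    have e1 : Num.min b c = c by apply: min_r; exact: ltW.
    have e2 : Num.max b c = b by apply: max_l; exact: ltW.
    rewrite e1 e2 in hn.
    case: (ltP (alpha j) c) => h1; first by left.
    case: (ltP b (alpha j)) => h2; first by right.
    by exfalso; apply: hn; rewrite h1 h2.
  have hprod' := esym hprod.
  have EB : forall j, (1 <= j <= n)%N -> ln (B j) = - ln ((c - alpha j) / (b - alpha j)).
    move=> j hj; rewrite /B -invf_div lnV // posrE.
    case: (ho j hj) => h.
    * by apply: divr_gt0; rewrite subr_gt0 //; apply: lt_trans h gt.
    * rewrite -mulrNN -invrN; apply: divr_gt0; rewrite oppr_gt0 subr_lt0 //.
      exact: lt_trans gt h.
  have sE : forall (s : nat -> int), \sum_(1 <= j < n.+1) (s j)%:~R * ln (B j) =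
      - \sum_(1 <= j < n.+1) (s j)%:~R * ln ((c - alpha j) / (b - alpha j)).
    move=> s; rewrite -sumrN big_seq [RHS]big_seq; apply: eq_bigr => j.
    rewrite mem_index_iota => hj; rewrite EB ?mulrN //; lia.
  rewrite !sE -mulrNN -invrN opprK opprK; apply: divr_gt0.
  + exact: (@side R n alpha c b d' t' c2 n0 gt ho hprod' ordv ncv htv).
  + exact: (@side R n alpha c b d t c1 n0 gt ho hprod' ordu ncu htu).
Qed.
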